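(* Let $G=(V,E)$ be a prime permutation graph, let $(<_1,<_2)$ be a realizer of $G$, and let $w$ be the first element of $<_1$. Then $\vartriangleleft_1^w=\,<_1$ and $\vartriangleleft_2^w=\,<_2$.
   Context: Graphs are finite, simple, undirected, with nonempty vertex set. A module of $G$ is a nonempty $M\subseteq V$ such that every vertex outside $M$ is adjacent to all or none of $M$; $G$ is prime if its only modules are $V$ and the singletons. A realizer of $G$ is a pair $(<_1,<_2)$ of strict linear orders on $V$ such that distinct $u,v$ are adjacent iff they appear in different orders in $<_1$ and $<_2$; $G$ is a permutation graph if it has a realizer. For a pair of binary relations $(\lhd_1,\lhd_2)$ on $V$: its transitive closure is $(\lhd_1^T,\lhd_2^T)$ (componentwise); its closure under $E$ is $(\lhd_1^E,\lhd_2^E)$ where, for $i\in[2]$, $\lhd_i^E=\lhd_i\cup\{(v,u)\mid u\lhd_{3-i}v,\ \{u,v\}\in E\}\cup\{(u,v)\mid u\lhd_{3-i}v,\ \{u,v\}\notin E\}$. For $w\in V$ define $\lhd_{1,0}^w=\{(w,v)\mid v\in V, v\ne w\}$, $\lhd_{2,0}^w=\emptyset$, and for $k\ge0$, $(\lhd_{1,k+1}^w,\lhd_{2,k+1}^w)=((\lhd_{1,k}^w,\lhd_{2,k}^w)^E)^T$. These increase with $k$; $\lhd_i^w$ denotes $\lhd_{i,m}^w$ for $m$ such that the sequence has stabilized. *)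

(* Defs.v *)
From mathcomp Require Import all_boot.
Set Implicit Arguments. Unset Strict Implicit. Unset Printing Implicit Defensive.

(* A finite simple graph on the finType T: symmetric irreflexive edge relation e.
   The vertex set V is [set: T] (nonemptiness follows from the existence of w). *)
Definition simple_graph (T : finType) (e : rel T) : Prop :=
  symmetric e /\ irreflexive e.

Definition is_module (T : finType) (e : rel T) (M : {set T}) : Prop :=
  M != set0 /\
  forall x, x \notin M -> (forall y, y \in M -> e x y) \/ (forall y, y \in M -> ~~ e x y).

Definition prime_graph (T : finType) (e : rel T) : Prop :=
  forall M : {set T}, is_module e M -> M = [set: T] \/ exists v, M = [set v].

Definition strict_linear_order (T : finType) (r : rel T) : Prop :=
  irreflexive r /\ transitive r /\ (forall u v, u != v -> r u v || r v u).

Definition realizer (T : finType) (e : rel T) (lt1 lt2 : rel T) : Prop :=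
  strict_linear_order lt1 /\ strict_linear_order lt2 /\
  forall u v, u != v ->
    (e u v <-> (lt1 u v && lt2 v u) || (lt1 v u && lt2 u v)).

Definition tclosure (T : finType) (r : rel T) : rel T :=
  fun u v => [exists x, r u x && connect r x v].

Definition tclosure2 (T : finType) (p : rel T * rel T) : rel T * rel T :=
  (tclosure p.1, tclosure p.2).

Definition Eclosure (T : finType) (e : rel T) (p : rel T * rel T) : rel T * rel T :=
  let l1 := p.1 in let l2 := p.2 in
  ((fun a b => [|| l1 a b, l2 b a && e a b | l2 a b && ~~ e a b]),
   (fun a b => [|| l2 a b, l1 b a && e a b | l1 a b && ~~ e a b])).

Definition lhd0 (T : finType) (w : T) : rel T * rel T :=
  ((fun a b => (a == w) && (b != w)), (fun _ _ => false)).

Fixpoint lhd_k (T : finType) (e : rel T) (w : T) (k : nat) : rel T * rel T :=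
  match k with
  | 0 => lhd0 w
  | k.+1 => tclosure2 (Eclosure e (lhd_k e w k))
  end.

Definition stabilized_at (T : finType) (e : rel T) (w : T) (m : nat) : Prop :=
  forall k, m <= k -> (lhd_k e w k).1 =2 (lhd_k e w m).1 /\
                      (lhd_k e w k).2 =2 (lhd_k e w m).2.

(* Main.v *)
Require Import Defs.
From mathcomp Require Import all_boot.
Set Implicit Arguments. Unset Strict Implicit. Unset Printing Implicit Defensive.

Lemma connect_inv (T : finType) (r : rel T) (P : pred T) a :
  P a -> (forall x y, connect r a x -> r x y -> P x -> P y) ->
  forall x, connect r a x -> P x.
Proof.
move=> Pa step x /connectP [p pth ->].
suff H: forall p b, connect r a b -> P b -> path r b p -> P (last b p).
  exact: H p a (connect0 _ a) Pa pth.
elim=> [|c q IH] b cab Pb //= /andP [rbc pq].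
apply: IH pq; first exact: connect_trans cab (connect1 rbc).
exact: step cab rbc Pb.
Qed.

Lemma tcl_sub (T : finType) (r : rel T) u v : r u v -> tclosure r u v.
Proof. by move=> h; apply/existsP; exists v; rewrite h connect0. Qed.

Lemma tcl_trans (T : finType) (r : rel T) u v z :
  tclosure r u v -> tclosure r v z -> tclosure r u z.
Proof.
move=> /existsP [x /andP [rux cxv]] /existsP [y /andP [rvy cyz]].
apply/existsP; exists x; rewrite rux /=.
apply: connect_trans cxv _; exact: connect_trans (connect1 rvy) cyz.
Qed.

Lemma tcl_min (T : finType) (r R : rel T) :
  (forall u v, r u v -> R u v) -> transitive R ->
  forall u v, tclosure r u v -> R u v.
Proof.
move=> sub tR u v /existsP [x /andP [rux cxv]].
have Rux := sub _ _ rux.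
have: (v == x) || R x v.
  apply: (connect_inv (P := fun y => (y == x) || R x y)) cxv; first by rewrite eqxx.
  move=> y z _ ryz /orP [/eqP Hy | Rxy]; first by subst y; rewrite sub ?orbT.
  by rewrite (tR y x z Rxy (sub _ _ ryz)) orbT.
case/orP=> [/eqP-> // | Rxv]; exact: tR Rux Rxv.
Qed.

Lemma lhd_mono1 (T : finType) (e : rel T) w k :
  (forall u v, (lhd_k e w k).1 u v -> (lhd_k e w k.+1).1 u v) /\
  (forall u v, (lhd_k e w k).2 u v -> (lhd_k e w k.+1).2 u v).
Proof. by split=> u v h; apply: tcl_sub; rewrite /= h. Qed.

Lemma lhd_mono (T : finType) (e : rel T) w k j : k <= j ->
  (forall u v, (lhd_k e w k).1 u v -> (lhd_k e w j).1 u v) /\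
  (forall u v, (lhd_k e w k).2 u v -> (lhd_k e w j).2 u v).
Proof.
elim: j => [|j IH]; first by rewrite leqn0 => /eqP->.
rewrite leq_eqVlt => /orP [/eqP->//|]; rewrite ltnS => /IH [h1 h2].
have [m1 m2] := lhd_mono1 e w j.
by split=> u v h; [apply: m1; apply: h1 | apply: m2; apply: h2].
Qed.

Section Main.
Variables (T : finType) (e : rel T) (lt1 lt2 : rel T) (w : T).
Hypothesis sg : simple_graph e.
Hypothesis pg : prime_graph e.
Hypothesis rz : realizer e lt1 lt2.
Hypothesis hw : forall v, v != w -> lt1 w v.

Lemma esym x y : e x y = e y x.
Proof. by case: sg => s _; apply: s. Qed.

Lemma e_neq x y : e x y -> x != y.
Proof. by case: sg => _ i; apply: contraTneq => ->; rewrite i. Qed.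

Lemma lt1_irr x : lt1 x x = false.
Proof. by case: rz => [[i _] _]; apply: i. Qed.
Lemma lt2_irr x : lt2 x x = false.
Proof. by case: rz => [_ [[i _] _]]; apply: i. Qed.
Lemma lt1_tr : transitive lt1.
Proof. by case: rz => [[_ [t _]] _]. Qed.
Lemma lt2_tr : transitive lt2.
Proof. by case: rz => [_ [[_ [t _]] _]]. Qed.
Lemma lt1_tot x y : x != y -> lt1 x y || lt1 y x.
Proof. by case: rz => [[_ [_ t]] _]; apply: t. Qed.
Lemma lt2_tot x y : x != y -> lt2 x y || lt2 y x.
Proof. by case: rz => [_ [[_ [_ t]] _]]; apply: t. Qed.
Lemma lt1_asym x y : lt1 x y -> lt1 y x = false.
Proof. by move=> h; apply/negP => h'; have := lt1_tr h h'; rewrite lt1_irr. Qed.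
Lemma lt2_asym x y : lt2 x y -> lt2 y x = false.
Proof. by move=> h; apply/negP => h'; have := lt2_tr h h'; rewrite lt2_irr. Qed.
Lemma rzE x y : x != y -> e x y = (lt1 x y && lt2 y x) || (lt1 y x && lt2 x y).
Proof. by case: rz => [_ [_ r]] n; apply/idP/idP => /(r _ _ n). Qed.

Lemma sA1 a b : lt2 b a -> e a b -> lt1 a b.
Proof.
move=> h ea; move: (ea); rewrite rzE ?e_neq // (lt2_asym h).
by rewrite andbF orbF => /andP [].
Qed.
Lemma sA2 a b : lt2 a b -> ~~ e a b -> lt1 a b.
Proof.
move=> h ne; have nab : a != b by apply: contraTneq h => ->; rewrite lt2_irr.
case/orP: (lt1_tot nab) => // h1; move: ne; by rewrite rzE // h1 h orbT.
Qed.
Lemma sB1 a b : lt1 b a -> e a b -> lt2 a b.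
Proof.
move=> h ea; move: (ea); rewrite rzE ?e_neq // (lt1_asym h) /=.
by move=> /andP [].
Qed.
Lemma sB2 a b : lt1 a b -> ~~ e a b -> lt2 a b.
Proof.
move=> h ne; have nab : a != b by apply: contraTneq h => ->; rewrite lt1_irr.
case/orP: (lt2_tot nab) => // h2; move: ne; by rewrite rzE // h h2.
Qed.

Lemma sound k :
  (forall u v, (lhd_k e w k).1 u v -> lt1 u v) /\
  (forall u v, (lhd_k e w k).2 u v -> lt2 u v).
Proof.
elim: k => [|k [IH1 IH2]].
  by split=> u v //= /andP [/eqP-> ]; apply: hw.
split; apply: tcl_min; try apply: lt1_tr; try apply: lt2_tr;
  move=> u v /= /or3P [h|/andP [h1 h2]|/andP [h1 h2]].
- exact: IH1.
- exact: sA1 (IH2 _ _ h1) h2.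
- exact: sA2 (IH2 _ _ h1) h2.
- exact: IH2.
- exact: sB1 (IH1 _ _ h1) h2.
- exact: sB2 (IH1 _ _ h1) h2.
Qed.

Variable m : nat.
Hypothesis fix1 : (lhd_k e w m.+1).1 =2 (lhd_k e w m).1.
Hypothesis fix2 : (lhd_k e w m.+1).2 =2 (lhd_k e w m).2.

Definition A := (lhd_k e w m).1.
Definition B := (lhd_k e w m).2.
Definition D x y := A x y || A y x.

Lemma Atr x y z : A x y -> A y z -> A x z.
Proof. rewrite /A -!fix1 /=; exact: tcl_trans. Qed.
Lemma Btr x y z : B x y -> B y z -> B x z.
Proof. rewrite /B -!fix2 /=; exact: tcl_trans. Qed.
Lemma rA1 x y : B y x -> e x y -> A x y.
Proof. by move=> h1 h2; rewrite /A -fix1; apply: tcl_sub; rewrite /= -/B h1 h2 orbT. Qed.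
Lemma rA2 x y : B x y -> ~~ e x y -> A x y.
Proof. by move=> h1 h2; rewrite /A -fix1; apply: tcl_sub; rewrite /= -/B h1 h2 !orbT. Qed.
Lemma rB1 x y : A y x -> e x y -> B x y.
Proof. by move=> h1 h2; rewrite /B -fix2; apply: tcl_sub; rewrite /= -/A h1 h2 orbT. Qed.
Lemma rB2 x y : A x y -> ~~ e x y -> B x y.
Proof. by move=> h1 h2; rewrite /B -fix2; apply: tcl_sub; rewrite /= -/A h1 h2 !orbT. Qed.

Lemma DB x y : B x y -> D x y.
Proof.
move=> h; rewrite /D; case E: (e x y).
  by rewrite (@rA1 y x) ?orbT // esym.
by rewrite (@rA2 x y) ?E.
Qed.

Lemma Dsym x y : D x y = D y x.
Proof. by rewrite /D orbC. Qed.

Lemma Dlem a b c : D a b -> D b c -> e b a != e b c -> D a c.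
Proof.
case/orP=> [Aab|Aba]; case/orP=> [Abc|Acb]; case Eba: (e b a); case Ebc: (e b c) => //= _.
- by rewrite /D (Atr Aab Abc).
- by rewrite /D (Atr Aab Abc).
- rewrite Dsym; apply: DB; apply: (Btr (y := b)).
    by apply: rB2 => //; first [by rewrite ?Eba ?Ebc | by rewrite esym ?Eba ?Ebc].
  by apply: rB1 => //; first [by rewrite ?Eba ?Ebc | by rewrite esym ?Eba ?Ebc].
- apply: DB; apply: (Btr (y := b)).
    by apply: rB2 => //; first [by rewrite ?Eba ?Ebc | by rewrite esym ?Eba ?Ebc].
  by apply: rB1 => //; first [by rewrite ?Eba ?Ebc | by rewrite esym ?Eba ?Ebc].
- apply: DB; apply: (Btr (y := b)).
    by apply: rB1 => //; first [by rewrite ?Eba ?Ebc | by rewrite esym ?Eba ?Ebc].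
  by apply: rB2 => //; first [by rewrite ?Eba ?Ebc | by rewrite esym ?Eba ?Ebc].
- rewrite Dsym; apply: DB; apply: (Btr (y := b)).
    by apply: rB1 => //; first [by rewrite ?Eba ?Ebc | by rewrite esym ?Eba ?Ebc].
  by apply: rB2 => //; first [by rewrite ?Eba ?Ebc | by rewrite esym ?Eba ?Ebc].
- by rewrite /D (Atr Acb Aba) orbT.
- by rewrite /D (Atr Acb Aba) orbT.
Qed.

Lemma Aw v : v != w -> A w v.
Proof.
move=> nv; have [h1 _] := lhd_mono e w (leq0n m).
by apply: h1 => /=; rewrite eqxx nv.
Qed.

Lemma Dw v : v != w -> D v w.
Proof. by move=> nv; rewrite /D Aw ?orbT. Qed.

Lemma Dtot x y : x != y -> D x y.
Proof.
move=> nxy; case Dxy: (D x y) => //; exfalso.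
pose H := fun u v => (u != v) && ~~ D u v.
pose C := [set z | connect H x z].
have xC : x \in C by rewrite inE connect0.
have yC : y \in C by rewrite inE connect1 // /H nxy Dxy.
have xw : x != w.
  apply/negP=> /eqP xw; move: Dxy; rewrite xw Dsym Dw //; by rewrite -xw eq_sym.
have wC : w \notin C.
  rewrite inE; apply/negP => cxw.
  suff: w != w by rewrite eqxx.
  apply: (@connect_inv T H (fun u => u != w) x xw _ w cxw).
  move=> u v _ /andP [nuv nD] nuw.
  by apply: contraNneq nD => ->; rewrite Dw.
have cst : forall z, z \notin C -> forall u, u \in C -> e z u = e z x.
  move=> z zC u; rewrite inE => cu.
  apply/eqP; move: u cu; apply: connect_inv => // u u' cu Huu' /eqP <-.
  case ne: (e z u' == e z u) => //.
  have Dz : forall t, connect H x t -> D t z.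
    move=> t ct; case Dtz: (D t z) => //; exfalso.
    have : z \in C.
      rewrite inE; apply: connect_trans (ct) (connect1 _).
      rewrite /H Dtz andbT; apply: contraNneq zC => <-; by rewrite /C inE.
    by rewrite (negbTE zC).
  case/andP: (Huu') => _ /negP nD; exfalso; apply: nD.
  apply: Dlem (Dz _ cu) _ _; first by rewrite Dsym; apply: Dz; apply: connect_trans cu (connect1 Huu').
  by rewrite eq_sym ne.
have modC : is_module e C.
  split; first by apply/set0Pn; exists x.
  move=> z zC; case E: (e z x); [left|right] => u uC; by rewrite cst // E.
case: (pg modC) => [CT | [v Cv]].
  by move: wC; rewrite CT inE.
by move: xC yC nxy; rewrite Cv !inE => /eqP-> /eqP->; rewrite eqxx.
Qed.

Lemma complete : A =2 lt1 /\ B =2 lt2.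
Proof.
have [s1 s2] := sound m.
split=> u v; apply/idP/idP; try apply: s1; try apply: s2.
- move=> h; have nuv : u != v by apply: contraTneq h => ->; rewrite lt1_irr.
  case/orP: (Dtot nuv) => // Avu; by have := s1 _ _ Avu; rewrite (lt1_asym h).
- move=> h; have nuv : u != v by apply: contraTneq h => ->; rewrite lt2_irr.
  case/orP: (Dtot nuv) => Ah; case E: (e u v).
  + by have := s2 _ _ (@rB1 v u Ah (etrans (esym v u) E)); rewrite (lt2_asym h).
  + by apply: rB2 => //; rewrite E.
  + by apply: rB1.
  + have E' : ~~ e v u by rewrite esym E.
    by have := s2 _ _ (rB2 Ah E'); rewrite (lt2_asym h).
Qed.

End Main.

Theorem corollary5p7 (T : finType) (e : rel T) (lt1 lt2 : rel T) (w : T) :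
  simple_graph e -> prime_graph e -> realizer e lt1 lt2 ->
  (forall v, v != w -> lt1 w v) ->
  (exists m, stabilized_at e w m) /\
  (forall m, stabilized_at e w m ->
     (lhd_k e w m).1 =2 lt1 /\ (lhd_k e w m).2 =2 lt2).
Proof.
move=> sg pg rz hw.
have key : forall m, (lhd_k e w m.+1).1 =2 (lhd_k e w m).1 ->
    (lhd_k e w m.+1).2 =2 (lhd_k e w m).2 ->
    (lhd_k e w m).1 =2 lt1 /\ (lhd_k e w m).2 =2 lt2.
  by move=> m f1 f2; apply: (complete sg pg rz hw f1 f2).
split; last first.
  by move=> m st; have [f1 f2] := st m.+1 (leqnSn m); exact: key.
pose S k := [set p : bool * (T * T) | if p.1 then (lhd_k e w k).1 p.2.1 p.2.2
                                      else (lhd_k e w k).2 p.2.1 p.2.2].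
have Ssub k : S k \subset S k.+1.
  apply/subsetP => [[b [u v]]]; rewrite !inE /=; have [h1 h2] := lhd_mono1 e w k.
  by case: b; [apply: h1 | apply: h2].
have cardS : forall k, (forall j, j < k -> S j != S j.+1) -> k <= #|S k|.
  elim=> [|k IH] hj //.
  have h := IH (fun j hj' => hj j (ltnW hj')).
  have pr : S k \proper S k.+1 by rewrite properEneq hj // Ssub.
  exact: leq_ltn_trans h (proper_card pr).
set N := #|{: bool * (T * T)}|.
have : [exists j : 'I_N.+1, S j == S j.+1].
  case E: [exists j : 'I_N.+1, S j == S j.+1] => //.
  move/negbT: E => /existsPn hn.
  have := cardS N.+1 (fun j hj => hn (Ordinal hj)).
  by rewrite leqNgt ltnS max_card.
case/existsP => j /eqP Sj.
have f1 : (lhd_k e w j.+1).1 =2 (lhd_k e w j).1.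
  move=> u v; move/setP/(_ (true, (u, v))): (Sj).
  by rewrite !inE /= => ->.
have f2 : (lhd_k e w j.+1).2 =2 (lhd_k e w j).2.
  move=> u v; move/setP/(_ (false, (u, v))): (Sj).
  by rewrite !inE /= => ->.
have [k1 k2] := key j f1 f2.
exists j => k jk.
have [m1 m2] := lhd_mono e w jk.
have [s1 s2] := sound sg rz hw k.
split=> u v; apply/idP/idP.
- by move=> h; rewrite k1; apply: s1.
- exact: m1.
- by move=> h; rewrite k2; apply: s2.
- exact: m2.
Qed.
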